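(* Let $k$ be a field, $D\ge0$ an integer and $e_1,e_2,e_3$ nonnegative integers with $e_i\le D$ for all $i$ and $e_i+e_j\le D$ for all $i\ne j$. Let $R_1,R_2,R_3\in k[u,v]$ be nonzero homogeneous polynomials of degrees $e_1,e_2,e_3$. Then the $k$-vector space $$\{(R'_1,R'_2,R'_3)\in k[u,v]_{D-e_1}\times k[u,v]_{D-e_2}\times k[u,v]_{D-e_3}:\ R_1R'_1+R_2R'_2+R_3R'_3=0\}$$ has dimension $2+2D-(e_1+e_2+e_3)+\deg\gcd(R_1,R_2,R_3)$.
   Context: $k[u,v]_m$ denotes the space of homogeneous polynomials of degree $m$ in two variables (including $0$). *)

(* Defs.v *)
(* k[u,v] is represented as {poly {poly k}}:
   for p : {poly {poly k}}, the coefficient of u^i v^j is (p`_j)`_i. *)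
From HB Require Import structures.
From mathcomp Require Import all_boot all_order all_algebra.
Set Implicit Arguments. Unset Strict Implicit. Unset Printing Implicit Defensive.
Import GRing.Theory.
Local Open Scope ring_scope.

Notation bipoly k := {poly {poly k}}.

Definition bicoef (k : fieldType) (p : bipoly k) (i j : nat) : k := (p`_j)`_i.

Definition homog (k : fieldType) (m : nat) (p : bipoly k) : Prop :=
  forall i j, bicoef p i j != 0 -> (i + j)%N = m.

Definition bconst (k : fieldType) (c : k) : bipoly k := c%:P%:P.

Definition bdvd (k : fieldType) (g p : bipoly k) : Prop := exists q, p = g * q.

Definition is_gcd3 (k : fieldType) (g p1 p2 p3 : bipoly k) : Prop :=
  [/\ bdvd g p1, bdvd g p2, bdvd g p3 &
      forall h, bdvd h p1 -> bdvd h p2 -> bdvd h p3 -> bdvd h g].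

Definition triple (k : fieldType) := (bipoly k * bipoly k * bipoly k)%type.

Definition tcomb (k : fieldType) (n : nat) (c : 'I_n -> k) (b : 'I_n -> triple k)
  : triple k :=
  (\sum_(i < n) bconst (c i) * (b i).1.1,
   \sum_(i < n) bconst (c i) * (b i).1.2,
   \sum_(i < n) bconst (c i) * (b i).2).

Definition has_dim (k : fieldType) (S : triple k -> Prop) (n : nat) : Prop :=
  exists b : 'I_n -> triple k,
    [/\ forall i, S (b i),
        (forall c : 'I_n -> k, tcomb c b = (0, 0, 0) -> forall i, c i = 0) &
        (forall x, S x -> exists c : 'I_n -> k, x = tcomb c b)].

Definition syz (k : fieldType) (D e1 e2 e3 : nat) (R1 R2 R3 : bipoly k)
  (x : triple k) : Prop :=
  [/\ homog (D - e1) x.1.1, homog (D - e2) x.1.2, homog (D - e3) x.2 &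
      R1 * x.1.1 + R2 * x.1.2 + R3 * x.2 = 0].

(* Main.v *)
Require Import Defs.
From HB Require Import structures.
From mathcomp Require Import all_boot all_order all_algebra.
From mathcomp Require Import ring zify.
Import GRing.Theory.
Set Implicit Arguments. Unset Strict Implicit. Unset Printing Implicit Defensive.
Local Open Scope ring_scope.

Lemma mul_lin1 (k : fieldType) m n (f : 'rV[k]_m -> 'rV[k]_n) :
  (forall a u v, f (a *: u + v) = a *: f u + f v) ->
  forall u, u *m lin1_mx f = f u.
Proof.
move=> lf u.
pose fL : {linear 'rV[k]_m -> 'rV[k]_n} :=
  HB.pack f (GRing.isLinear.Build _ _ _ _ f lf).
exact: (mul_rV_lin1 fL).
Qed.

Definition dehom (k : fieldType) (p : bipoly k) : {poly k} := map_poly (horner_eval 1) p.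

Lemma dehomM (k : fieldType) (p q : bipoly k) : dehom (p * q) = dehom p * dehom q.
Proof. by rewrite /dehom rmorphM. Qed.
Lemma dehomD (k : fieldType) (p q : bipoly k) : dehom (p + q) = dehom p + dehom q.
Proof. by rewrite /dehom rmorphD. Qed.
Lemma dehom0 (k : fieldType) : dehom (0 : bipoly k) = 0.
Proof. by rewrite /dehom rmorph0. Qed.

Definition hom (k : fieldType) (m : nat) (P : {poly k}) : bipoly k :=
  \poly_(j < m.+1) (P`_j *: 'X^(m - j)).

Section Hom.
Variable k : fieldType.
Implicit Types (P Q : {poly k}) (p q : bipoly k).

Lemma homog_hom m P : homog m (hom m P).
Proof.
move=> i j; rewrite /bicoef coef_poly; case: ltnP => hj; last by rewrite coef0 eqxx.
rewrite coefZ coefXn; have [->|ne] := eqVneq i (m - j)%N; last by rewrite mulr0 eqxx.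
by move=> _; rewrite subnK // -ltnS.
Qed.

Lemma dehom_hom m P : (size P <= m.+1)%N -> dehom (hom m P) = P.
Proof.
move=> hs; apply/polyP => j; rewrite /dehom coef_map /= coef_poly.
case: ltnP => hj; first by rewrite horner_evalE hornerZ hornerXn expr1n mulr1.
by rewrite horner_evalE horner0; move/leq_sizeP: hs => ->.
Qed.

Lemma homog_big m p j : homog m p -> (m < j)%N -> p`_j = 0.
Proof.
move=> hp hj; apply/polyP => i; rewrite coef0; apply/eqP; apply/negP => /negP h.
by have := hp i j h; move=> E; move: hj; rewrite -E; rewrite ltnNge leq_addl.
Qed.

Lemma hom_dehom m p : homog m p -> p = hom m (dehom p).
Proof.
move=> hp; apply/polyP => j; rewrite coef_poly /dehom coef_map /= horner_evalE.
case: (ltnP j m.+1) => hj; last exact: (homog_big hp hj).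
have E : p`_j = (p`_j)`_(m-j) *: 'X^(m-j).
  apply/polyP => i; rewrite coefZ coefXn.
  have [->|ne] := eqVneq i (m - j)%N; first by rewrite mulr1.
  rewrite mulr0; apply/eqP; apply/negP => /negP h.
  by move/eqP: ne; apply; have := hp i j h => <-; rewrite addnK.
by rewrite E hornerZ hornerXn expr1n mulr1.
Qed.

Lemma size_dehom m p : homog m p -> (size (dehom p) <= m.+1)%N.
Proof.
move=> hp; apply/leq_sizeP => j hj.
by rewrite /dehom coef_map /= (homog_big hp hj) horner_evalE horner0.
Qed.

Lemma homog_eq m p q : homog m p -> homog m q -> dehom p = dehom q -> p = q.
Proof. by move=> hp hq E; rewrite (hom_dehom hp) (hom_dehom hq) E. Qed.

Lemma homog0 m : homog m (0 : bipoly k).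
Proof. by move=> i j; rewrite /bicoef coef0 coef0 eqxx. Qed.

Lemma homogD m p q : homog m p -> homog m q -> homog m (p + q).
Proof.
move=> hp hq i j; rewrite /bicoef coefD coefD.
case: (eqVneq (p`_j)`_i 0) => [->|]; first by rewrite add0r; apply: hq.
by move=> h _; apply: hp.
Qed.

Lemma homogM m n p q : homog m p -> homog n q -> homog (m + n) (p * q).
Proof.
move=> hp hq i j; apply: contraNeq => ne.
rewrite /bicoef coefM coef_sum; apply/eqP; apply: big1 => a _.
rewrite coefM; apply: big1 => b _.
case: (eqVneq (p`_a)`_b 0) => [->|h1]; first by rewrite mul0r.
case: (eqVneq (q`_(j - a))`_(i - b) 0) => [->|h2]; first by rewrite mulr0.
have E1 := hp _ _ h1; have E2 := hq _ _ h2.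
have := ltn_ord a; have := ltn_ord b; move: ne; rewrite -E1 -E2.
move: (nat_of_ord a) (nat_of_ord b) => a' b' ne ha hb.
exfalso; move/eqP: ne; apply.
rewrite ltnS in ha hb.
by rewrite addnA (addnC b') -(addnA a') subnKC // (addnC a') -addnA subnKC.
Qed.

Lemma homD m P Q : hom m (P + Q) = hom m P + hom m Q.
Proof.
apply/polyP => j; rewrite coefD !coef_poly; case: ifP => _; last by rewrite addr0.
by rewrite coefD scalerDl.
Qed.

Lemma hom0 m : hom m (0 : {poly k}) = 0.
Proof. by apply/polyP => j; rewrite coef_poly !coef0 scale0r if_same. Qed.

Lemma homZ m c P : hom m (c *: P) = bconst c * hom m P.
Proof.
apply/polyP => j; rewrite /bconst coefCM !coef_poly; case: ifP => _; last by rewrite mulr0.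
by rewrite coefZ mul_polyC scalerA.
Qed.

Lemma hom_sum m n (F : 'I_n -> {poly k}) :
  hom m (\sum_(i < n) F i) = \sum_(i < n) hom m (F i).
Proof. by apply: (big_morph (hom m)); [apply: homD | apply: hom0]. Qed.

End Hom.

Section Surj.
Variable k : fieldType.
Implicit Types (P Q X : {poly k}).

Lemma size_mul_le P Q a b : (size P <= a)%N -> (size Q <= b)%N ->
  (size (P * Q)%R <= (a + b).-1)%N.
Proof.
move=> ha hb; apply: leq_trans (size_polyMleq P Q) _.
case: (size P) ha => [|sp] ha; case: (size Q) hb => [|sq] hb /=; lia.
Qed.

Lemma surj3 Q1 Q2 Q3 X (f1 f2 f3 t : nat) :
  Q2 != 0 -> (exists Y1 Y2 Y3, Q1 * Y1 + Q2 * Y2 + Q3 * Y3 = 1) ->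
  (size Q1 <= f1.+1)%N -> (size Q2 <= f2.+1)%N -> size Q3 = f3.+1 ->
  (f1 + f2 <= t)%N -> (f2 + f3 <= t)%N -> (size X <= t.+1)%N ->
  exists X1 X2 X3, X = Q1 * X1 + Q2 * X2 + Q3 * X3 /\
    [/\ (size X1 <= (t - f1).+1)%N, (size X2 <= (t - f2).+1)%N &
        (size X3 <= (t - f3).+1)%N].
Proof.
move=> nz2 [Y1 [Y2 [Y3 EY]]] s1 s2 s3 h12 h23 sX.
have nz3 : Q3 != 0 by rewrite -size_poly_eq0 s3.
have e1 := divp_eq (X * Y1) Q2.
have l1 := ltn_modpN0 (X * Y1) nz2.
move: (X * Y1 %/ Q2) (X * Y1 %% Q2) e1 l1 => C A1 e1 l1.
have e2 := divp_eq (X * Y2 + Q1 * C) Q3.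
have l2 := ltn_modpN0 (X * Y2 + Q1 * C) nz3.
move: ((X * Y2 + Q1 * C) %/ Q3) ((X * Y2 + Q1 * C) %% Q3) e2 l2 => C' A2 e2 l2.
have EA1 : A1 = X * Y1 - C * Q2 by rewrite e1 addrC addKr.
have EA2 : A2 = X * Y2 + Q1 * C - C' * Q3 by rewrite e2 addrC addKr.
have EX : X = Q1 * A1 + Q2 * A2 + Q3 * (X * Y3 + Q2 * C').
  by rewrite EA1 EA2 -{1}[X]mulr1 -EY; ring.
exists A1, A2, (X * Y3 + Q2 * C'); split => //.
have sA1 : (size A1 <= f2)%N by rewrite -ltnS (leq_trans l1 s2).
have sA2 : (size A2 <= f3)%N by rewrite -ltnS -s3.
split; [apply: leq_trans sA1 _; lia | apply: leq_trans sA2 _; lia |].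
move: EX; move: (X * Y3 + Q2 * C') => Z EX.
have EW : Q3 * Z = X - Q1 * A1 - Q2 * A2 by rewrite [in RHS]EX; ring.
have sW : (size (Q3 * Z)%R <= t.+1)%N.
  rewrite EW; apply: leq_trans (size_polyD _ _) _; rewrite geq_max; apply/andP; split.
    apply: leq_trans (size_polyD _ _) _; rewrite geq_max size_polyN sX /=.
    apply: leq_trans (size_mul_le s1 sA1) _; lia.
  rewrite size_polyN; apply: leq_trans (size_mul_le s2 sA2) _; lia.
have [->|nzZ] := eqVneq Z 0; first by rewrite size_poly0.
have f3t : (f3 <= t)%N by apply: leq_trans h23; apply: leq_addl.
move: sW; rewrite size_mul // s3 addSn /= => h; rewrite -subSn // leq_subRL //; apply: leq_trans f3t _; apply: leqnSn.
Qed.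

End Surj.

Section Bez.
Variable k : fieldType.
Implicit Types (P Q X : {poly k}).

Lemma bez2 P Q : exists a b, P * a + Q * b = gcdp P Q.
Proof.
have [u /eqpP [[c1 c2] /andP [/= n1 n2] E]] := Bezoutp P Q.
exists ((c1 / c2) *: u.1), ((c1 / c2) *: u.2).
have -> : P * (c1 / c2 *: u.1) + Q * (c1 / c2 *: u.2) =
  c2^-1 *: (c1 *: (u.1 * P + u.2 * Q)).
  by rewrite scalerA (mulrC _ c1) scalerDr !scalerAl (mulrC P) (mulrC Q).
by rewrite E scalerA mulVf // scale1r.
Qed.

Lemma bez3 P1 P2 P3 : exists Y1 Y2 Y3,
  P1 * Y1 + P2 * Y2 + P3 * Y3 = gcdp (gcdp P1 P2) P3.
Proof.
have [a [b E1]] := bez2 P1 P2.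
have [c [d E2]] := bez2 (gcdp P1 P2) P3.
exists (a * c), (b * c), d; rewrite -E2 -E1; ring.
Qed.

Lemma surj3p Q1 Q2 Q3 X (f1 f2 f3 t : nat) :
  Q1 != 0 -> Q2 != 0 -> Q3 != 0 ->
  (exists Y1 Y2 Y3, Q1 * Y1 + Q2 * Y2 + Q3 * Y3 = 1) ->
  (size Q1 <= f1.+1)%N -> (size Q2 <= f2.+1)%N -> (size Q3 <= f3.+1)%N ->
  [\/ size Q1 = f1.+1, size Q2 = f2.+1 | size Q3 = f3.+1] ->
  (f1 + f2 <= t)%N -> (f1 + f3 <= t)%N -> (f2 + f3 <= t)%N -> (size X <= t.+1)%N ->
  exists X1 X2 X3, X = Q1 * X1 + Q2 * X2 + Q3 * X3 /\
    [/\ (size X1 <= (t - f1).+1)%N, (size X2 <= (t - f2).+1)%N &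
        (size X3 <= (t - f3).+1)%N].
Proof.
move=> n1 n2 n3 [Y1 [Y2 [Y3 EY]]] s1 s2 s3 [e|e|e] h12 h13 h23 sX.
- have bz : exists Z3 Z2 Z1, Q3 * Z3 + Q2 * Z2 + Q1 * Z1 = 1.
    by exists Y3, Y2, Y1; rewrite -EY; ring.
  have h32 : (f3 + f2 <= t)%N by rewrite addnC.
  have h21 : (f2 + f1 <= t)%N by rewrite addnC.
  have [X3 [X2 [X1 [E [l3 l2 l1]]]]] := surj3 n2 bz s3 s2 e h32 h21 sX.
  by exists X1, X2, X3; split => //; rewrite E; ring.
- have bz : exists Z1 Z3 Z2, Q1 * Z1 + Q3 * Z3 + Q2 * Z2 = 1.
    by exists Y1, Y3, Y2; rewrite -EY; ring.
  have h32 : (f3 + f2 <= t)%N by rewrite addnC.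
  have [X1 [X3 [X2 [E [l1 l3 l2]]]]] := surj3 n3 bz s1 s3 e h13 h32 sX.
  by exists X1, X2, X3; split => //; rewrite E; ring.
- have bz : exists Z1 Z2 Z3, Q1 * Z1 + Q2 * Z2 + Q3 * Z3 = 1.
    by exists Y1, Y2, Y3.
  exact: surj3 n2 bz s1 s2 e h12 h23 sX.
Qed.

End Bez.

Section Lin.
Variable k : fieldType.
Variables a1 a2 a3 : nat.
Local Notation N := (a1.+1 + a2.+1 + a3.+1)%N.
Implicit Types (Y : {poly k}).

Definition v1 (w : 'rV[k]_N) : {poly k} := rVpoly (lsubmx (lsubmx w)).
Definition v2 (w : 'rV[k]_N) : {poly k} := rVpoly (rsubmx (lsubmx w)).
Definition v3 (w : 'rV[k]_N) : {poly k} := rVpoly (rsubmx w).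

Definition dec (w : 'rV[k]_N) : triple k := (hom a1 (v1 w), hom a2 (v2 w), hom a3 (v3 w)).

Definition enc3 (Y1 Y2 Y3 : {poly k}) : 'rV[k]_N :=
  row_mx (row_mx (poly_rV Y1) (poly_rV Y2)) (poly_rV Y3).

Lemma v1_enc (Y1 Y2 Y3 : {poly k}) : (size Y1 <= a1.+1)%N -> v1 (enc3 Y1 Y2 Y3) = Y1.
Proof. by move=> h; rewrite /v1 /enc3 !row_mxKl poly_rV_K. Qed.
Lemma v2_enc (Y1 Y2 Y3 : {poly k}) : (size Y2 <= a2.+1)%N -> v2 (enc3 Y1 Y2 Y3) = Y2.
Proof. by move=> h; rewrite /v2 /enc3 row_mxKl row_mxKr poly_rV_K. Qed.
Lemma v3_enc (Y1 Y2 Y3 : {poly k}) : (size Y3 <= a3.+1)%N -> v3 (enc3 Y1 Y2 Y3) = Y3.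
Proof. by move=> h; rewrite /v3 /enc3 row_mxKr poly_rV_K. Qed.

Lemma size_v1 w : (size (v1 w) <= a1.+1)%N. Proof. exact: size_poly. Qed.
Lemma size_v2 w : (size (v2 w) <= a2.+1)%N. Proof. exact: size_poly. Qed.
Lemma size_v3 w : (size (v3 w) <= a3.+1)%N. Proof. exact: size_poly. Qed.

Lemma v1_lin c u w : v1 (c *: u + w) = c%:P * v1 u + v1 w.
Proof. by rewrite /v1 !linearP /= mul_polyC. Qed.
Lemma v2_lin c u w : v2 (c *: u + w) = c%:P * v2 u + v2 w.
Proof. by rewrite /v2 !linearP /= mul_polyC. Qed.
Lemma v3_lin c u w : v3 (c *: u + w) = c%:P * v3 u + v3 w.
Proof. by rewrite /v3 !linearP /= mul_polyC. Qed.

Lemma dec_lin n (c : 'I_n -> k) (r : 'I_n -> 'rV[k]_N) :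
  tcomb c (fun i => dec (r i)) = dec (\sum_(i < n) c i *: r i).
Proof.
rewrite /tcomb /dec /v1 /v2 /v3 /=; congr (_, _, _);
  rewrite !linear_sum hom_sum; apply: eq_bigr => i _; by rewrite !linearZ /= homZ.
Qed.

Lemma dec0 w : dec w = (0, 0, 0) -> w = 0.
Proof.
rewrite /dec => -[E1 E2 E3].
have Z : forall a (Y : {poly k}), (size Y <= a.+1)%N -> hom a Y = 0 -> Y = 0.
  by move=> a Y hs E; rewrite -(dehom_hom hs) E /dehom rmorph0.
move: (Z _ _ (size_v1 w) E1) (Z _ _ (size_v2 w) E2) (Z _ _ (size_v3 w) E3).
rewrite /v1 /v2 /v3 => F1 F2 F3.
rewrite -[w]hsubmxK -[lsubmx w]hsubmxK.
by rewrite -(rVpolyK (lsubmx (lsubmx w))) -(rVpolyK (rsubmx (lsubmx w))) -(rVpolyK (rsubmx w)) F1 F2 F3 !linear0 !row_mx0.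
Qed.

End Lin.

Lemma size_comb3 (k : fieldType) (D e1 e2 e3 : nat) (P1 P2 P3 Y1 Y2 Y3 : {poly k}) :
  (e1 <= D)%N -> (e2 <= D)%N -> (e3 <= D)%N ->
  (size P1 <= e1.+1)%N -> (size P2 <= e2.+1)%N -> (size P3 <= e3.+1)%N ->
  (size Y1 <= (D - e1).+1)%N -> (size Y2 <= (D - e2).+1)%N -> (size Y3 <= (D - e3).+1)%N ->
  (size (P1 * Y1 + P2 * Y2 + P3 * Y3)%R <= D.+1)%N.
Proof.
move=> h1 h2 h3 p1 p2 p3 y1 y2 y3.
have E : forall e, (e <= D)%N -> ((e.+1 + (D - e).+1).-1 = D.+1)%N.
  by move=> e he; rewrite addSn /= addnS subnKC.
apply: leq_trans (size_polyD _ _) _; rewrite geq_max; apply/andP; split.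
  apply: leq_trans (size_polyD _ _) _; rewrite geq_max; apply/andP; split.
    by rewrite -(E _ h1) size_mul_le.
  by rewrite -(E _ h2) size_mul_le.
by rewrite -(E _ h3) size_mul_le.
Qed.

Lemma has_dim_syz (k : fieldType) (D e1 e2 e3 t : nat) (R1 R2 R3 : bipoly k)
  (G : {poly k}) :
  (e1 <= D)%N -> (e2 <= D)%N -> (e3 <= D)%N ->
  homog e1 R1 -> homog e2 R2 -> homog e3 R3 ->
  G != 0 -> (size G + t <= D.+1)%N ->
  (forall Y1 Y2 Y3 : {poly k}, (size Y1 <= (D - e1).+1)%N ->
     (size Y2 <= (D - e2).+1)%N -> (size Y3 <= (D - e3).+1)%N ->
     exists Z : {poly k}, (size Z <= t.+1)%N /\
       dehom R1 * Y1 + dehom R2 * Y2 + dehom R3 * Y3 = G * Z) ->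
  (forall Z : {poly k}, (size Z <= t.+1)%N -> exists Y1 Y2 Y3 : {poly k},
     [/\ (size Y1 <= (D - e1).+1)%N, (size Y2 <= (D - e2).+1)%N,
         (size Y3 <= (D - e3).+1)%N &
       dehom R1 * Y1 + dehom R2 * Y2 + dehom R3 * Y3 = G * Z]) ->
  has_dim (syz D e1 e2 e3 R1 R2 R3)
    ((D - e1).+1 + (D - e2).+1 + (D - e3).+1 - t.+1).
Proof.
move=> h1 h2 h3 H1 H2 H3 nzG sG Hin Hsurj.
have p1 := size_dehom H1; have p2 := size_dehom H2; have p3 := size_dehom H3.
pose fM := fun w : 'rV[k]_((D - e1).+1 + (D - e2).+1 + (D - e3).+1) =>
  (poly_rV (dehom R1 * v1 w + dehom R2 * v2 w + dehom R3 * v3 w) : 'rV[k]_(D.+1)).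
have linM : forall c u w, fM (c *: u + w) = c *: fM u + fM w.
  move=> c u w; rewrite /fM -linearP; congr poly_rV.
  by rewrite v1_lin v2_lin v3_lin -!mul_polyC; ring.
pose M := lin1_mx fM.
have FM : forall w, w *m M = fM w := mul_lin1 linM.
pose fB := fun v : 'rV[k]_(t.+1) => (poly_rV (G * rVpoly v) : 'rV[k]_(D.+1)).
have linB : forall c u w, fB (c *: u + w) = c *: fB u + fB w.
  move=> c u w; rewrite /fB -linearP; congr poly_rV.
  by rewrite linearP /= -!mul_polyC; ring.
pose B := lin1_mx fB.
have FB : forall v, v *m B = fB v := mul_lin1 linB.
have freeB : row_free B.
  apply: inj_row_free => v; rewrite FB /fB => E.
  have sz : (size (G * rVpoly v)%R <= D.+1)%N.
    apply: leq_trans (size_mul_le (leqnn _) (size_poly _ _)) _.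
    by move: sG; rewrite addnS /=.
  have : G * rVpoly v = 0 by rewrite -(poly_rV_K sz) E linear0.
  move/eqP; rewrite mulf_eq0 (negbTE nzG) /= => /eqP E2.
  by rewrite -(rVpolyK v) E2 linear0.
have MB : (M <= B)%MS.
  apply/row_subP => i; rewrite rowE FM /fM.
  have [Z [sZ EZ]] := Hin _ _ _ (size_v1 (delta_mx 0 i)) (size_v2 (delta_mx 0 i))
                          (size_v3 (delta_mx 0 i)).
  by apply/submxP; exists (poly_rV Z : 'rV_(t.+1)); rewrite FB /fB poly_rV_K // EZ.
have BM : (B <= M)%MS.
  apply/row_subP => i; rewrite rowE FB /fB; set dv := delta_mx _ _.
  have [Y1 [Y2 [Y3 [s1 s2 s3 EY]]]] := Hsurj (rVpoly dv) (size_poly _ _).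
  apply/submxP; exists (enc3 (D - e1) (D - e2) (D - e3) Y1 Y2 Y3); rewrite FM /fM.
  by rewrite v1_enc // v2_enc // v3_enc // EY.
have rkM : \rank M = t.+1.
  apply/eqP; rewrite eqn_leq; move/eqP: freeB => rB.
  by rewrite -{1}rB (mxrankS MB) -{1}rB (mxrankS BM).
set K := kermx M.
have -> : ((D - e1).+1 + (D - e2).+1 + (D - e3).+1 - t.+1 = \rank K)%N.
  by rewrite /K mxrank_ker rkM.
have decS : forall w, w *m M = 0 -> syz D e1 e2 e3 R1 R2 R3 (dec w).
  move=> w; rewrite FM /fM /dec => E.
  have sz := size_comb3 h1 h2 h3 p1 p2 p3 (size_v1 w) (size_v2 w) (size_v3 w).
  have E0 : dehom R1 * v1 w + dehom R2 * v2 w + dehom R3 * v3 w = 0.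
    by rewrite -(poly_rV_K sz) E linear0.
  have hD : forall e, (e <= D)%N -> (e + (D - e))%N = D by move=> e he; rewrite subnKC.
  split; rewrite /=; try exact: homog_hom.
  apply: (@homog_eq _ D); last first.
    by rewrite !dehomD !dehomM !dehom_hom ?size_v1 ?size_v2 ?size_v3 // E0 /dehom rmorph0.
    exact: homog0.
  apply: homogD; [apply: homogD|].
  - by move: (homogM H1 (homog_hom (m:=(D - e1)%N) (P:=v1 w))); rewrite hD.
  - by move: (homogM H2 (homog_hom (m:=(D - e2)%N) (P:=v2 w))); rewrite hD.
  - by move: (homogM H3 (homog_hom (m:=(D - e3)%N) (P:=v3 w))); rewrite hD.
exists (fun i => dec (row i (row_base K))); split.
- move=> i; apply: decS; apply/sub_kermxP.
  rewrite -/K; apply: submx_trans (row_sub i _) _; by rewrite (eq_row_base K) submx_refl.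
- move=> c E i.
  have : (\row_j c j) *m row_base K = 0.
    apply: dec0; rewrite mulmx_sum_row; under eq_bigr => j _ do rewrite mxE.
    by rewrite -dec_lin -E.
  move/eqP; rewrite mulmx_free_eq0 ?row_base_free // => /eqP/rowP/(_ i).
  by rewrite !mxE.
- move=> [[x1 x2] x3] [/= X1 X2 X3 EX].
  pose w := enc3 (D - e1) (D - e2) (D - e3) (dehom x1) (dehom x2) (dehom x3).
  have dw : dec w = (x1, x2, x3).
    rewrite /dec /w v1_enc ?v2_enc ?v3_enc ?size_dehom //.
    by rewrite -!hom_dehom.
  have wK : (w <= K)%MS.
    apply/sub_kermxP; rewrite FM /fM /w v1_enc ?v2_enc ?v3_enc ?size_dehom //.
    by rewrite -!dehomM -!dehomD EX /dehom rmorph0 linear0.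
  have : (w <= row_base K)%MS by rewrite (eq_row_base K).
  case/submxP => c Ec.
  exists (fun i => c 0 i); rewrite dec_lin -mulmx_sum_row -Ec dw //.
Qed.

Lemma gcd_setup (k : fieldType) (P1 P2 P3 : {poly k}) :
  P1 != 0 -> P2 != 0 -> P3 != 0 ->
  exists Gm Q1 Q2 Q3 : {poly k},
    [/\ Gm != 0, [/\ Q1 != 0, Q2 != 0 & Q3 != 0],
        [/\ P1 = Q1 * Gm, P2 = Q2 * Gm & P3 = Q3 * Gm] &
        exists Y1 Y2 Y3 : {poly k}, Q1 * Y1 + Q2 * Y2 + Q3 * Y3 = 1].
Proof.
move=> n1 n2 n3.
set Gm := gcdp (gcdp P1 P2) P3.
have nG : Gm != 0 by rewrite /Gm !gcdp_eq0 (negbTE n3) andbF.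
have d1 : Gm %| P1 by apply: dvdp_trans (dvdp_gcdl _ _) (dvdp_gcdl _ _).
have d2 : Gm %| P2 by apply: dvdp_trans (dvdp_gcdl _ _) (dvdp_gcdr _ _).
have d3 : Gm %| P3 by apply: dvdp_gcdr.
have E1 := divpK d1; have E2 := divpK d2; have E3 := divpK d3.
have [Y1 [Y2 [Y3 EY]]] := bez3 P1 P2 P3.
exists Gm, (P1 %/ Gm), (P2 %/ Gm), (P3 %/ Gm); split => //; first split.
- by apply: contraNneq n1 => E; rewrite -E1 E mul0r.
- by apply: contraNneq n2 => E; rewrite -E2 E mul0r.
- by apply: contraNneq n3 => E; rewrite -E3 E mul0r.
have EY' : P1 * Y1 + P2 * Y2 + P3 * Y3 = Gm := EY.
exists Y1, Y2, Y3; apply: (mulfI nG); rewrite mulr1 -[in RHS]EY' -[in RHS]E1 -[in RHS]E2 -[in RHS]E3.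
ring.
Qed.

Lemma gcd_uv (k : fieldType) (G h : bipoly k) (t : nat) :
  h != 0 -> bdvd h (G * ('X^t)%:P) -> bdvd h (G * 'X^t) -> bdvd h G.
Proof.
move=> nh [q1 E1] [q2 E2].
have nu : (('X^t)%:P : bipoly k) != 0 by rewrite polyC_eq0 monic_neq0 ?monicXn.
have E : q1 * 'X^t = q2 * ('X^t)%:P.
  apply: (mulfI nh); rewrite !mulrA -E1 -E2; ring.
pose r := \poly_(j < size q1) q2`_(j + t).
exists r; apply: (mulIf nu); rewrite E1 -mulrA; congr (_ * _).
apply/polyP => j; rewrite coefMC coef_poly.
case: ltnP => hj; last by rewrite mul0r; apply: nth_default.
have := congr1 (fun p : bipoly k => p`_(j + t)%N) E; rewrite /= coefMC coefMXn.
by rewrite ltnNge leq_addl /= addnK.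
Qed.

Lemma homog_u (k : fieldType) t : homog t (('X^t)%:P : bipoly k).
Proof.
move=> i j; rewrite /bicoef coefC; have [->|nj] := eqVneq j 0%N; last by rewrite coef0 eqxx.
rewrite coefXn; have [->|ni] := eqVneq i t; first by rewrite addn0.
by rewrite mulr0n eqxx.
Qed.

Lemma homog_v (k : fieldType) t : homog t ('X^t : bipoly k).
Proof.
move=> i j; rewrite /bicoef coefXn; have [->|nj] := eqVneq j t; last by rewrite mulr0n coef0 eqxx.
rewrite coef1; have [->|ni] := eqVneq i 0%N; first by rewrite add0n.
by rewrite mulr0n eqxx.
Qed.

Theorem lemma3p12 (k : fieldType) (D e1 e2 e3 : nat) (R1 R2 R3 : bipoly k) :
  (e1 <= D)%N -> (e2 <= D)%N -> (e3 <= D)%N ->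
  (e1 + e2 <= D)%N -> (e1 + e3 <= D)%N -> (e2 + e3 <= D)%N ->
  R1 != 0 -> R2 != 0 -> R3 != 0 ->
  homog e1 R1 -> homog e2 R2 -> homog e3 R3 ->
  exists (G : bipoly k) (d : nat),
    [/\ is_gcd3 G R1 R2 R3, G != 0, homog d G &
        has_dim (syz D e1 e2 e3 R1 R2 R3) (2 + 2 * D + d - (e1 + e2 + e3))%N].
Proof.
move=> h1 h2 h3 h12 h13 h23 nR1 nR2 nR3 H1 H2 H3.
have eR1 := hom_dehom H1; have eR2 := hom_dehom H2; have eR3 := hom_dehom H3.
have sP1 := size_dehom H1; have sP2 := size_dehom H2; have sP3 := size_dehom H3.
have nP1 : dehom R1 != 0 by apply: contraNneq nR1 => E; rewrite eR1 E hom0.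
have nP2 : dehom R2 != 0 by apply: contraNneq nR2 => E; rewrite eR2 E hom0.
have nP3 : dehom R3 != 0 by apply: contraNneq nR3 => E; rewrite eR3 E hom0.
have [Gm [Q1 [Q2 [Q3 [nG [nQ1 nQ2 nQ3] [EP1 EP2 EP3] bz]]]]] := gcd_setup nP1 nP2 nP3.
have zP1 : size (dehom R1) = (size Q1 + size Gm).-1 by rewrite EP1 size_mul.
have zP2 : size (dehom R2) = (size Q2 + size Gm).-1 by rewrite EP2 size_mul.
have zP3 : size (dehom R3) = (size Q3 + size Gm).-1 by rewrite EP3 size_mul.
have gG : (0 < size Gm)%N by rewrite size_poly_gt0.
have gQ1 : (0 < size Q1)%N by rewrite size_poly_gt0.
have gQ2 : (0 < size Q2)%N by rewrite size_poly_gt0.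
have gQ3 : (0 < size Q3)%N by rewrite size_poly_gt0.
have [mu Hmu] : exists mu, mu = minn (e1 - (size (dehom R1)).-1)
   (minn (e2 - (size (dehom R2)).-1) (e3 - (size (dehom R3)).-1)) by eexists.
have [d Hd] : exists d, d = ((size Gm).-1 + mu)%N by eexists.
have de1 : (d <= e1)%N by clear -zP1 gG gQ1 sP1 Hmu Hd; lia.
have de2 : (d <= e2)%N by clear -zP2 gG gQ2 sP2 Hmu Hd; lia.
have de3 : (d <= e3)%N by clear -zP3 gG gQ3 sP3 Hmu Hd; lia.
have sQ1 : (size Q1 <= (e1 - d).+1)%N by clear -zP1 gG gQ1 sP1 Hmu Hd; lia.
have sQ2 : (size Q2 <= (e2 - d).+1)%N by clear -zP2 gG gQ2 sP2 Hmu Hd; lia.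
have sQ3 : (size Q3 <= (e3 - d).+1)%N by clear -zP3 gG gQ3 sP3 Hmu Hd; lia.
have ex : [\/ size Q1 = (e1 - d).+1, size Q2 = (e2 - d).+1 | size Q3 = (e3 - d).+1].
  have : [\/ mu = (e1 - (size (dehom R1)).-1)%N, mu = (e2 - (size (dehom R2)).-1)%N |
             mu = (e3 - (size (dehom R3)).-1)%N].
    rewrite Hmu; case: (leqP (e1 - (size (dehom R1)).-1) (minn (e2 - (size (dehom R2)).-1) (e3 - (size (dehom R3)).-1))) => h.
      by apply: Or31; clear -Hmu h; lia.
    case: (leqP (e2 - (size (dehom R2)).-1) (e3 - (size (dehom R3)).-1)) => h'.
      by apply: Or32; clear -Hmu h h'; lia.
    by apply: Or33; clear -Hmu h h'; lia.
  by case=> E; [apply: Or31 | apply: Or32 | apply: Or33];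
    clear -E Hd zP1 zP2 zP3 gG gQ1 gQ2 gQ3 sP1 sP2 sP3; lia.
have f12 : ((e1 - d) + (e2 - d) <= D - d)%N by clear -h12 de1 de2; lia.
have f13 : ((e1 - d) + (e3 - d) <= D - d)%N by clear -h13 de1 de3; lia.
have f23 : ((e2 - d) + (e3 - d) <= D - d)%N by clear -h23 de2 de3; lia.
have tf1 : ((D - d) - (e1 - d) = D - e1)%N by clear -h1 de1; lia.
have tf2 : ((D - d) - (e2 - d) = D - e2)%N by clear -h2 de2; lia.
have tf3 : ((D - d) - (e3 - d) = D - e3)%N by clear -h3 de3; lia.
have sGd : (size Gm <= d.+1)%N by clear -Hd gG; lia.
have dD : (d <= D)%N by clear -de1 h1; lia.
have usurj : forall X : {poly k}, (size X <= (D - d).+1)%N ->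
  exists Z1 Z2 Z3 : {poly k},
    [/\ (size Z1 <= (D - e1).+1)%N, (size Z2 <= (D - e2).+1)%N,
        (size Z3 <= (D - e3).+1)%N &
      dehom R1 * Z1 + dehom R2 * Z2 + dehom R3 * Z3 = Gm * X].
  move=> X sX.
  have [X1 [X2 [X3 [EX [l1 l2 l3]]]]] := surj3p nQ1 nQ2 nQ3 bz sQ1 sQ2 sQ3 ex f12 f13 f23 sX.
  exists X1, X2, X3; rewrite -tf1 -tf2 -tf3; split => //.
  by rewrite EP1 EP2 EP3 EX; ring.
have dG : dehom (hom d Gm) = Gm := dehom_hom sGd.
have nGG : hom d Gm != 0.
  by apply: contraNneq nG => E; rewrite -dG E /dehom rmorph0.
have eRS : forall e (R : bipoly k) (Q : {poly k}), (d <= e)%N -> homog e R -> (size Q <= (e - d).+1)%N ->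
    dehom R = Q * Gm -> R = hom d Gm * hom (e - d) Q.
  move=> e R Q de HR sQ EP; apply: (homog_eq (m:=e)) => //.
    by have := homogM (homog_hom (m:=d) (P:=Gm)) (homog_hom (m:=(e - d)%N) (P:=Q)); rewrite subnKC.
  by rewrite dehomM dG dehom_hom // EP mulrC.
have hD : forall e, (e <= D)%N -> (e + (D - e))%N = D by move=> e he; rewrite subnKC.
have hsurj : forall X : bipoly k, homog (D - d) X ->
    exists x1 x2 x3, hom d Gm * X = R1 * x1 + R2 * x2 + R3 * x3.
  move=> X HX; have [Z1 [Z2 [Z3 [s1 s2 s3 EZ]]]] := usurj _ (size_dehom HX).
  exists (hom (D - e1) Z1), (hom (D - e2) Z2), (hom (D - e3) Z3).
  apply: (homog_eq (m:=D)).
  - by have := homogM (homog_hom (m:=d) (P:=Gm)) HX; rewrite subnKC.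
  - apply: homogD; [apply: homogD|].
    + by move: (homogM H1 (homog_hom (m:=(D - e1)%N) (P:=Z1))); rewrite hD.
    + by move: (homogM H2 (homog_hom (m:=(D - e2)%N) (P:=Z2))); rewrite hD.
    + by move: (homogM H3 (homog_hom (m:=(D - e3)%N) (P:=Z3))); rewrite hD.
  - by rewrite !dehomD !dehomM dG !dehom_hom // EZ.
exists (hom d Gm), d; split.
- split.
  + by exists (hom (e1 - d) Q1); apply: eRS.
  + by exists (hom (e2 - d) Q2); apply: eRS.
  + by exists (hom (e3 - d) Q3); apply: eRS.
  + move=> h [q1 E1] [q2 E2] [q3 E3].
    have nh : h != 0 by apply: contraNneq nR1 => E; rewrite E1 E mul0r.
    apply: (@gcd_uv _ _ _ (D - d)%N nh).
    * have [x1 [x2 [x3 Ex]]] := hsurj _ (@homog_u k (D - d)%N).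
      by exists (q1 * x1 + q2 * x2 + q3 * x3); rewrite Ex E1 E2 E3; ring.
    * have [x1 [x2 [x3 Ex]]] := hsurj _ (@homog_v k (D - d)%N).
      by exists (q1 * x1 + q2 * x2 + q3 * x3); rewrite Ex E1 E2 E3; ring.
- exact: nGG.
- exact: homog_hom.
have -> : (2 + 2 * D + d - (e1 + e2 + e3) =
  (D - e1).+1 + (D - e2).+1 + (D - e3).+1 - (D - d).+1)%N.
  by clear -de1 de2 de3 h1 h2 h3 dD; lia.
apply: (has_dim_syz (G:=Gm)) => //.
- by clear -sGd dD; lia.
- move=> Z1 Z2 Z3 s1 s2 s3; exists (Q1 * Z1 + Q2 * Z2 + Q3 * Z3); split.
    rewrite -tf1 in s1; rewrite -tf2 in s2; rewrite -tf3 in s3.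
    by apply: (size_comb3 (D:=(D - d)%N) (e1:=(e1 - d)%N) (e2:=(e2 - d)%N) (e3:=(e3 - d)%N)) => //; apply: leq_sub2r.
  by rewrite EP1 EP2 EP3; ring.
Qed.
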